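(* Let $\alpha: I\subset\mathbb{R}\to\mathbb{R}^3_1$ be a semi-real spatial quaternionic curve, parametrized by pseudo arc length $s$, with a spacelike or timelike rectifying plane, curvature $k(s)>0$ and torsion $r(s)$. Then $\alpha$ is (congruent to) a semi-real spatial quaternionic rectifying curve if and only if $\frac{r(s)}{k(s)}=c_1 s+c_2$ for some $c_1,c_2\in\mathbb{R}$ with $c_1\neq 0$.
   Context: $\mathbb{R}^3_1$ is the semi-Euclidean (Minkowski) 3-space, identified with the space of semi-real spatial quaternions $q=q_1\mathbf{e}_1+q_2\mathbf{e}_2+q_3\mathbf{e}_3$, with inner product $h(p,q)=p_1q_1+p_2q_2-p_3q_3$. Pseudo arc length $s$ means $|h(\alpha',\alpha')|=1$. The non-null Frenet frame $\{\mathbf{t},\mathbf{n}_1,\mathbf{n}_2\}$ with $h(\mathbf{t},\mathbf{t})=\varepsilon_t$, $h(\mathbf{n}_1,\mathbf{n}_1)=\varepsilon_{n_1}$, $h(\mathbf{n}_2,\mathbf{n}_2)=\varepsilon_{n_2}$ ($\varepsilon\in\{\pm1\}$) satisfies $\mathbf{t}'=\varepsilon_{n_1}k\mathbf{n}_1$, $\mathbf{n}_1'=-\varepsilon_t k\mathbf{t}+\varepsilon_{n_1}r\mathbf{n}_2$, $\mathbf{n}_2'=-\varepsilon_{n_2}r\mathbf{n}_1$. The rectifying plane is the plane spanned by $\mathbf{t}$ and $\mathbf{n}_2$. A rectifying curve is one with $\alpha(s)=\lambda(s)\mathbf{t}(s)+\mu(s)\mathbf{n}_2(s)$ for some differentiable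 functions $\lambda,\mu$; congruent means equal up to a rigid motion (here a translation) of $\mathbb{R}^3_1$. *)

(* Defs.v *)
From Stdlib Require Import Reals.
From Coquelicot Require Import Coquelicot.
Open Scope R_scope.

(* Points/vectors of the semi-Euclidean space R^3_1, identified with
   semi-real spatial quaternions q = q1 e1 + q2 e2 + q3 e3. *)
Record vec3 := V3 { q1 : R ; q2 : R ; q3 : R }.

Definition vadd (p q : vec3) : vec3 := V3 (q1 p + q1 q) (q2 p + q2 q) (q3 p + q3 q).
Definition vsub (p q : vec3) : vec3 := V3 (q1 p - q1 q) (q2 p - q2 q) (q3 p - q3 q).
Definition vscal (a : R) (p : vec3) : vec3 := V3 (a * q1 p) (a * q2 p) (a * q3 p).

Definition h (p q : vec3) : R := q1 p * q1 q + q2 p * q2 q - q3 p * q3 q.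

Definition vderive (f : R -> vec3) (s : R) (v : vec3) : Prop :=
  is_derive (fun u => q1 (f u)) s (q1 v) /\
  is_derive (fun u => q2 (f u)) s (q2 v) /\
  is_derive (fun u => q3 (f u)) s (q3 v).

Definition in_I (a b : Rbar) (s : R) : Prop := Rbar_lt a s /\ Rbar_lt s b.

Definition is_sign (e : R) : Prop := e = 1 \/ e = -1.

Definition rectifying_on (a b : Rbar) (alpha t n2 : R -> vec3) : Prop :=
  exists lam mu : R -> R,
    forall s, in_I a b s ->
      ex_derive lam s /\ ex_derive mu s /\
      alpha s = vadd (vscal (lam s) (t s)) (vscal (mu s) (n2 s)).

(* alpha is congruent (up to a translation, a rigid motion of R^3_1)
   to a rectifying curve: alpha - c is rectifying for some constant c. *)
Definition congruent_to_rectifying (a b : Rbar) (alpha t n2 : R -> vec3) : Prop :=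
  exists c : vec3, rectifying_on a b (fun s => vsub (alpha s) c) t n2.

(* Main.v *)
Require Import Defs.
From Stdlib Require Import Reals Lra.
From Coquelicot Require Import Coquelicot.
Open Scope R_scope.

Lemma deriv_ps (f g u v : R -> R) s df dg du dv :
  is_derive f s df -> is_derive g s dg -> is_derive u s du -> is_derive v s dv ->
  is_derive (fun x => f x * g x + u x * v x) s (df * g s + f s * dg + (du * v s + u s * dv)).
Proof.
  intros Hf Hg Hu Hv.
  apply (is_derive_plus (fun x => f x * g x) (fun x => u x * v x)).
  - apply (is_derive_mult f g); auto. intros; apply Rmult_comm.
  - apply (is_derive_mult u v); auto. intros; apply Rmult_comm.
Qed.

Lemma I_open a b s : in_I a b s -> locally s (in_I a b).
Proof.
  intros H. apply (@open_and R_UniformSpace (fun u : R => Rbar_lt a u) (fun u : R => Rbar_lt u b)).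
  apply open_Rbar_gt. apply open_Rbar_lt. exact H.
Qed.

Lemma I_nonempty a b : Rbar_lt a b -> exists s, in_I a b s.
Proof.
  destruct a as [a| |], b as [b| |]; simpl; intros H; try contradiction.
  - exists ((a+b)/2); unfold in_I; simpl; lra.
  - exists (a+1); unfold in_I; simpl; split; auto; lra.
  - exists (b-1); unfold in_I; simpl; split; auto; lra.
  - exists 0; unfold in_I; simpl; split; auto.
Qed.

Lemma I_between a b x y z : in_I a b x -> in_I a b y -> x <= z <= y -> in_I a b z.
Proof.
  unfold in_I; destruct a as [a| |], b as [b| |]; simpl; intros; lra.
Qed.

Lemma const_on_I a b f : (forall s, in_I a b s -> is_derive f s 0) ->
  forall x y, in_I a b x -> in_I a b y -> f x = f y.
Proof.
  intros Hd.
  assert (W : forall x y, x <= y -> in_I a b x -> in_I a b y -> f x = f y).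
  { intros x y Hxy Hx Hy.
    destruct (MVT_gen f x y (fun _ => 0)) as [c [_ Hc]].
    - intros z Hz. apply Hd. apply (I_between a b x y z); auto.
      rewrite Rmin_left, Rmax_right in Hz by lra. lra.
    - intros z Hz. rewrite Rmin_left, Rmax_right in Hz by lra.
      apply continuity_pt_filterlim.
      exact (ex_derive_continuous f z (ex_intro _ 0 (Hd z (I_between a b x y z Hx Hy Hz)))).
    - lra. }
  intros x y Hx Hy. destruct (Rle_dec x y).
  - apply W; auto.
  - symmetry; apply W; auto; lra.
Qed.

Lemma h_lin3 (y u v w x : vec3) D F E :
  q1 u = D*q1 v + F*q1 w + E*q1 x ->
  q2 u = D*q2 v + F*q2 w + E*q2 x ->
  q3 u = D*q3 v + F*q3 w + E*q3 x ->
  h y u = D*h y v + F*h y w + E * h y x.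
Proof. destruct y,u,v,w,x; unfold h; simpl; intros -> -> ->; ring. Qed.

Lemma h_sym u v : h u v = h v u.
Proof. unfold h; ring. Qed.

Lemma sign_sq e : is_sign e -> e * e = 1.
Proof. intros [-> | ->]; ring. Qed.
Lemma sign_nz e : is_sign e -> e <> 0.
Proof. intros [-> | ->]; lra. Qed.

Lemma comp_eq (A T N1 N2 lam mu : R->R) s (cc kk rr en1 en2 : R):
 is_derive A s (T s) -> is_derive T s (en1*kk*N1 s) -> is_derive N2 s (-(en2*rr)*N1 s) ->
 ex_derive lam s -> ex_derive mu s ->
 locally s (fun u => lam u * T u + mu u * N2 u = A u - cc) ->
 T s = Derive lam s * T s + (lam s * en1 * kk - mu s * en2 * rr) * N1 s + Derive mu s * N2 s.
Proof.
  intros HA HT HN Hl Hm Hloc.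
  pose proof (deriv_ps lam T mu N2 s _ _ _ _ (Derive_correct _ _ Hl) HT (Derive_correct _ _ Hm) HN) as H1.
  pose proof (is_derive_ext_loc _ _ _ _ Hloc H1) as H2.
  assert (H3 : is_derive (fun u => A u - cc) s (T s - 0)).
  { apply (is_derive_minus A (fun _ => cc)). exact HA. auto_derive; auto. }
  apply is_derive_unique in H2. apply is_derive_unique in H3.
  assert (E : T s - 0 = Derive lam s * T s + lam s * (en1 * kk * N1 s) +
     (Derive mu s * N2 s + mu s * (- (en2 * rr) * N1 s))).
  { rewrite <- H3. exact H2. }
  lra.
Qed.

Lemma der_val (f : R -> R) (s l l' : R) : is_derive f s l -> l = l' -> is_derive f s l'.
Proof. intros H ->; exact H. Qed.

Lemma comp_zero (A T N1 N2 : R->R) s kk rr en1 en2 c1 c2: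
  is_derive A s (T s) -> is_derive T s (en1*kk*N1 s) -> is_derive N2 s (-(en2*rr)*N1 s) ->
  en2*en2 = 1 -> c1<>0 -> kk<>0 -> rr / kk = c1*s+c2 ->
  is_derive (fun u => A u - ((u + c2/c1) * T u + (en1*en2/c1) * N2 u)) s 0.
Proof.
  intros HA HT HN He Hc Hk Hr.
  assert (HL : is_derive (fun u => u + c2/c1) s 1).
  { auto_derive; auto; ring. }
  assert (HM : is_derive (fun _ : R => en1*en2/c1) s 0).
  { auto_derive; auto. }
  pose proof (deriv_ps (fun u => u + c2/c1) T (fun _ => en1*en2/c1) N2 s _ _ _ _ HL HT HM HN) as H.
  pose proof (is_derive_minus A _ s _ _ HA H) as H2.
  eapply der_val. exact H2.
  assert (rr = kk * (c1*s+c2)) as ->.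
  { rewrite <- Hr. field. auto. }
  unfold minus, plus, opp; simpl.
  replace (en1 * en2 / c1 * (- (en2 * (kk * (c1 * s + c2))) * N1 s)) with
    (- (en2*en2) * en1 * kk * (s + c2/c1) * N1 s) by (field; auto).
  rewrite He. ring.
Qed.

Theorem theorem3p3
  (a b : Rbar) (Hab : Rbar_lt a b)
  (alpha t n1 n2 : R -> vec3) (k r : R -> R) (et en1 en2 : R)
  (Het : is_sign et) (Hen1 : is_sign en1) (Hen2 : is_sign en2)
  (* pseudo arc length parametrization: alpha' = t with h(t,t) = et = +-1 *)
  (Halpha : forall s, in_I a b s -> vderive alpha s (t s))
  (* non-null Frenet frame, orthonormal w.r.t. h *)
  (Htt : forall s, in_I a b s -> h (t s) (t s) = et)
  (Hn1n1 : forall s, in_I a b s -> h (n1 s) (n1 s) = en1)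
  (Hn2n2 : forall s, in_I a b s -> h (n2 s) (n2 s) = en2)
  (Htn1 : forall s, in_I a b s -> h (t s) (n1 s) = 0)
  (Htn2 : forall s, in_I a b s -> h (t s) (n2 s) = 0)
  (Hn1n2 : forall s, in_I a b s -> h (n1 s) (n2 s) = 0)
  (* Frenet equations *)
  (Ft : forall s, in_I a b s -> vderive t s (vscal (en1 * k s) (n1 s)))
  (Fn1 : forall s, in_I a b s ->
     vderive n1 s (vadd (vscal (- (et * k s)) (t s)) (vscal (en1 * r s) (n2 s))))
  (Fn2 : forall s, in_I a b s -> vderive n2 s (vscal (- (en2 * r s)) (n1 s)))
  (* positive curvature *)
  (Hk : forall s, in_I a b s -> 0 < k s)
  (* rectifying plane span{t, n2} is spacelike or timelike *)
  (Hplane : (et = 1 /\ en2 = 1) \/ et * en2 = -1) :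
  congruent_to_rectifying a b alpha t n2 <->
  exists c1 c2 : R, c1 <> 0 /\
    forall s, in_I a b s -> r s / k s = c1 * s + c2.
Proof.
  assert (He1 := sign_sq _ Hen1). assert (He2 := sign_sq _ Hen2).
  assert (Ne1 := sign_nz _ Hen1). assert (Ne2 := sign_nz _ Hen2). assert (Nt := sign_nz _ Het).
  destruct (I_nonempty a b Hab) as [s0 Hs0].
  split.
  - intros [c [lam [mu Hrec]]].
    assert (Key : forall s, in_I a b s -> Derive lam s = 1 /\ Derive mu s = 0 /\
        lam s * en1 * k s - mu s * en2 * r s = 0).
    { intros s Hs. destruct (Hrec s Hs) as [Dl [Dm _]].
      destruct (Halpha s Hs) as [A1 [A2 A3]].
      destruct (Ft s Hs) as [T1 [T2 T3]].
      destruct (Fn2 s Hs) as [N1 [N2 N3]].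
      simpl in T1, T2, T3, N1, N2, N3.
      assert (C1 := comp_eq (fun u => q1 (alpha u)) (fun u => q1 (t u)) (fun u => q1 (n1 u))
        (fun u => q1 (n2 u)) lam mu s (q1 c) (k s) (r s) en1 en2 A1 T1 N1 Dl Dm).
      assert (C2 := comp_eq (fun u => q2 (alpha u)) (fun u => q2 (t u)) (fun u => q2 (n1 u))
        (fun u => q2 (n2 u)) lam mu s (q2 c) (k s) (r s) en1 en2 A2 T2 N2 Dl Dm).
      assert (C3 := comp_eq (fun u => q3 (alpha u)) (fun u => q3 (t u)) (fun u => q3 (n1 u))
        (fun u => q3 (n2 u)) lam mu s (q3 c) (k s) (r s) en1 en2 A3 T3 N3 Dl Dm).
      assert (L := I_open a b s Hs).
      assert (LOC : forall (p : vec3 -> R), (forall x y, p (vsub x y) = p x - p y) ->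
         (forall x y, p (vadd x y) = p x + p y) -> (forall a v, p (vscal a v) = a * p v) ->
         locally s (fun u => lam u * p (t u) + mu u * p (n2 u) = p (alpha u) - p c)).
      { intros p Ps Pa Pv. apply (filter_imp (in_I a b)); [|exact L].
        intros u Hu. destruct (Hrec u Hu) as [_ [_ Q]]. apply (f_equal p) in Q.
        rewrite Ps, Pa, !Pv in Q. lra. }
      assert (E1 := C1 (LOC q1 (fun _ _ => eq_refl) (fun _ _ => eq_refl) (fun _ _ => eq_refl))).
      assert (E2 := C2 (LOC q2 (fun _ _ => eq_refl) (fun _ _ => eq_refl) (fun _ _ => eq_refl))).
      assert (E3 := C3 (LOC q3 (fun _ _ => eq_refl) (fun _ _ => eq_refl) (fun _ _ => eq_refl))).
      simpl in E1, E2, E3.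
      set (D := Derive lam s) in *. set (E := Derive mu s) in *.
      set (F := lam s * en1 * k s - mu s * en2 * r s) in *.
      assert (G1 := h_lin3 (t s) _ _ _ _ D F E E1 E2 E3).
      assert (G2 := h_lin3 (n2 s) _ _ _ _ D F E E1 E2 E3).
      assert (G3 := h_lin3 (n1 s) _ _ _ _ D F E E1 E2 E3).
      rewrite (h_sym (n2 s) (t s)), (h_sym (n2 s) (n1 s)) in G2.
      rewrite (h_sym (n1 s) (t s)) in G3.
      rewrite Htt, Htn1, Htn2 in G1 by exact Hs.
      rewrite Htn2, Hn1n2, Hn2n2 in G2 by exact Hs.
      rewrite Htn1, Hn1n1, Hn1n2 in G3 by exact Hs.
      split; [|split].
      - apply Rmult_eq_reg_r with et; [lra|exact Nt].
      - apply Rmult_eq_reg_r with en2; [lra|exact Ne2].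
      - apply Rmult_eq_reg_r with en1; [lra|exact Ne1]. }
    assert (Lc : forall s, in_I a b s -> lam s - s = lam s0 - s0).
    { intros s Hs. apply (const_on_I a b (fun u => lam u - u)); auto.
      intros x Hx. destruct (Key x Hx) as [K1 _]. destruct (Hrec x Hx) as [Dl _].
      auto_derive; auto. match goal with |- context [Derive ?f x] => replace (Derive f x) with 1 by (rewrite <- K1; reflexivity) end. ring. }
    assert (Mc : forall s, in_I a b s -> mu s = mu s0).
    { intros s Hs. apply (const_on_I a b mu); auto.
      intros x Hx. destruct (Key x Hx) as [_ [K2 _]]. destruct (Hrec x Hx) as [_ [Dm _]].
      rewrite <- K2. apply Derive_correct. exact Dm. }
    destruct (Req_dec (mu s0) 0) as [Z|Z].
    + exfalso.
      assert (Lz : forall s, in_I a b s -> lam s = 0).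
      { intros s Hs; destruct (Key s Hs) as [_ [_ K3]]. rewrite Mc, Z in K3 by auto.
        specialize (Hk s Hs).
        assert (H : lam s * (en1 * k s) = 0) by lra. apply Rmult_integral in H; destruct H as [H|H]; auto.
        exfalso; apply Rmult_integral in H; destruct H; [auto|lra]. }
      assert (Hd: is_derive lam s0 0).
      { apply (is_derive_ext_loc (fun _ => 0)).
        apply (filter_imp (in_I a b)); [|apply I_open; auto]. intros u Hu; symmetry; auto.
        auto_derive; auto. }
      apply is_derive_unique in Hd. destruct (Key s0 Hs0) as [K1 _]. lra.
    + exists (en1*en2/mu s0), ((lam s0 - s0)*en1*en2/mu s0). split.
      * intro H. assert (H' : en1*en2/mu s0 * mu s0 = en1*en2) by (field; auto).
        rewrite H in H'. assert (en1*en2*(en1*en2) = 1) by (replace (en1*en2*(en1*en2)) with ((en1*en1)*(en2*en2)) by ring; rewrite He1, He2; ring).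
        rewrite <- H' in H0. lra.
      * intros s Hs. destruct (Key s Hs) as [_ [_ K3]]. rewrite Mc in K3 by auto.
        pose proof (Lc s Hs) as L1. pose proof (Hk s Hs) as Ks.
        assert (R1: mu s0 * r s = lam s * en1 * en2 * k s).
        { rewrite <- (Rmult_1_r (mu s0 * r s)), <- He2.
          replace (mu s0 * r s * (en2*en2)) with ((mu s0 * en2 * r s) * en2) by ring.
          replace (lam s * en1 * en2 * k s) with ((lam s * en1 * k s) * en2) by ring.
          f_equal; lra. }
        assert (R2 : r s = lam s * en1 * en2 * k s / mu s0).
        { apply Rmult_eq_reg_l with (mu s0); auto. rewrite R1. field; auto. }
        rewrite R2. replace (lam s) with (s + (lam s0 - s0)) by lra. field; split; lra.
  - intros [c1 [c2 [Hc1 Hr]]].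
    assert (Z : forall p : vec3 -> R, (p = q1 \/ p = q2 \/ p = q3) -> forall s, in_I a b s ->
       is_derive (fun u => p (alpha u) - ((u + c2/c1) * p (t u) + (en1*en2/c1) * p (n2 u))) s 0).
    { intros p Hp s Hs. destruct (Halpha s Hs) as [A1 [A2 A3]].
      destruct (Ft s Hs) as [T1 [T2 T3]]. destruct (Fn2 s Hs) as [N1 [N2 N3]].
      simpl in T1, T2, T3, N1, N2, N3. specialize (Hk s Hs). specialize (Hr s Hs).
      destruct Hp as [E|[E|E]]; subst p.
      - apply (comp_zero (fun u => q1 (alpha u)) (fun u => q1 (t u)) (fun u => q1 (n1 u))
          (fun u => q1 (n2 u)) s (k s) (r s) en1 en2 c1 c2); auto; lra.
      - apply (comp_zero (fun u => q2 (alpha u)) (fun u => q2 (t u)) (fun u => q2 (n1 u))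
          (fun u => q2 (n2 u)) s (k s) (r s) en1 en2 c1 c2); auto; lra.
      - apply (comp_zero (fun u => q3 (alpha u)) (fun u => q3 (t u)) (fun u => q3 (n1 u))
          (fun u => q3 (n2 u)) s (k s) (r s) en1 en2 c1 c2); auto; lra. }
    set (g := fun (p : vec3 -> R) u => p (alpha u) - ((u + c2/c1) * p (t u) + (en1*en2/c1) * p (n2 u))).
    exists (V3 (g q1 s0) (g q2 s0) (g q3 s0)).
    exists (fun u => u + c2/c1), (fun _ => en1*en2/c1). intros s Hs.
    split; [auto_derive; auto|split; [auto_derive; auto|]].
    pose proof (const_on_I a b _ (Z q1 (or_introl eq_refl)) s s0 Hs Hs0) as K1.
    pose proof (const_on_I a b _ (Z q2 (or_intror (or_introl eq_refl))) s s0 Hs Hs0) as K2.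
    pose proof (const_on_I a b _ (Z q3 (or_intror (or_intror eq_refl))) s s0 Hs Hs0) as K3.
    unfold g; unfold vsub, vadd, vscal; simpl. simpl in K1, K2, K3.
    f_equal; lra.
Qed.
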